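(* Let $\Gamma$ be a finite triangle-free simplicial graph and let $\Lambda\subseteq\Gamma$ be a $K_{3,3}$ subdivision having the minimum number of edges among all $K_{3,3}$ subdivisions $\Lambda''\subseteq\Gamma$ with $B(\Lambda'')\le B(\Lambda)$. Suppose there is a bad edge of $\Lambda$ connecting $\Lambda$-non-essential vertices on two disjoint branches $\alpha$ and $\beta$ of $\Lambda$. Then the unique branch of $\Lambda$ disjoint from both $\alpha$ and $\beta$ is a single edge.
   Context: A subdivision of a graph $H$ is obtained from $H$ by repeatedly inserting valence-two vertices into edges. For a $K_{3,3}$ subdivision $\Lambda\subseteq\Gamma$, the $\Lambda$-essential vertices are those of valence $3$ in $\Lambda$; other vertices of $\Lambda$ are $\Lambda$-non-essential. A branch of $\Lambda$ is a path in $\Lambda$ between two $\Lambda$-essential vertices with no other $\Lambda$-essential vertex on it; two branches are adjacent if they share an endpoint and disjoint otherwise. A bad edge of $\Lambda$ is an edge of $\Gamma$ not in $\Lambda$ whose endpoints are both vertices of $\Lambda$; $B(\Lambda)$ is the number of bad edges. *)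

(* Defs.v *)
From mathcomp Require Import all_boot.
Set Implicit Arguments. Unset Strict Implicit. Unset Printing Implicit Defensive.

(* A finite simplicial graph: vertex type T : finType, adjacency e : rel T
   (assumed symmetric and irreflexive in the theorem). *)

Definition triangle_free (T : finType) (e : rel T) : Prop :=
  forall x y z, e x y -> e y z -> ~~ e x z.

Definition fullpath (T : Type) (a : T) (q : seq T) (b : T) : seq T :=
  a :: rcons q b.

Definition consec (T : eqType) (s : seq T) (x y : T) : bool :=
  ((x, y) \in zip s (behead s)) || ((y, x) \in zip s (behead s)).

Definition interior_ok (T : finType) (a b : 'I_3 -> T) (q : 'I_3 -> 'I_3 -> seq T)
    (i j : 'I_3) (x : T) : Prop :=
  (forall k, x != a k) /\ (forall k, x != b k) /\
  (forall i' j', (i', j') != (i, j) -> x \notin fullpath (a i') (q i' j') (b j')).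

(* A subgraph Lambda = (VL, EL) of Gamma = (T, e) is a K_{3,3} subdivision:
   there are six distinct vertices a_0,a_1,a_2,b_0,b_1,b_2 and nine paths
   P_ij (in Gamma) from a_i to b_j with interiors q i j, whose interiors are
   pairwise disjoint and avoid the a's, b's and all other paths, and Lambda is
   exactly the union of these paths (vertices and edges). *)
Definition isK33sub (T : finType) (e : rel T) (VL : {set T}) (EL : rel T) : Prop :=
  exists (a b : 'I_3 -> T) (q : 'I_3 -> 'I_3 -> seq T),
    [/\ [/\ injective a, injective b & (forall i j, a i != b j)],
        (forall i j, path e (a i) (rcons (q i j) (b j)) /\
                     uniq (fullpath (a i) (q i j) (b j))),
        (forall i j x, x \in q i j -> interior_ok a b q i j x),
        VL = [set x | [exists i, exists j, x \in fullpath (a i) (q i j) (b j)]] &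
        (forall x y, EL x y = [exists i, exists j, consec (fullpath (a i) (q i j) (b j)) x y])].

Definition nedges (T : finType) (EL : rel T) : nat :=
  #|[set s : {set T} | [exists x, exists y, EL x y && (s == [set x; y])]]|.

Definition bad_edge (T : finType) (e : rel T) (VL : {set T}) (EL : rel T) (x y : T) : bool :=
  [&& e x y, x \in VL, y \in VL & ~~ EL x y].

Definition nbad (T : finType) (e : rel T) (VL : {set T}) (EL : rel T) : nat :=
  #|[set s : {set T} | [exists x, exists y, bad_edge e VL EL x y && (s == [set x; y])]]|.

Definition valence (T : finType) (EL : rel T) (x : T) : nat := #|[set y | EL x y]|.

Definition essential (T : finType) (VL : {set T}) (EL : rel T) (x : T) : bool :=
  (x \in VL) && (valence EL x == 3).

Definition is_branch (T : finType) (VL : {set T}) (EL : rel T) (x : T) (q : seq T) (y : T) : bool :=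
  [&& path EL x (rcons q y), uniq (fullpath x q y), essential VL EL x,
      essential VL EL y & all (fun z => ~~ essential VL EL z) q].

Definition branches_disjoint (T : finType) (x1 y1 x2 y2 : T) : bool :=
  [&& x1 != x2, x1 != y2, y1 != x2 & y1 != y2].

(* Main.v *)
Require Import Defs.
From mathcomp Require Import all_boot zify.
Set Implicit Arguments. Unset Strict Implicit. Unset Printing Implicit Defensive.

Arguments consec : simpl never.
Arguments fullpath : simpl never.

Section SeqLemmas.
Variable T : eqType.
Implicit Types (s l r p : seq T) (x y z w a b : T).

Lemma zip_splitP s x y :
  (x, y) \in zip s (behead s) <-> exists l r, s = l ++ x :: y :: r.
Proof.
case: s => [|c s] /=; first by split => // -[[|? ?] [? ?]].
elim: s c => [|d s IH] c /=.
  by split => // -[[|? [|? ?]] [? ?]].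
rewrite in_cons; split.
  case/orP => [/eqP [-> ->]|/IH [l [r ->]]]; first by exists [::], s.
  by exists (c :: l), r.
case=> [[|c' l]] [r] /=.
  by case=> -> -> _; rewrite eqxx.
case=> -> E; apply/orP; right; apply/IH; by exists l, r.
Qed.

Lemma consecP s x y :
  consec s x y <-> exists l r, s = l ++ x :: y :: r \/ s = l ++ y :: x :: r.
Proof.
rewrite /consec; split.
  case/orP => /zip_splitP [l [r E]]; exists l, r; by [left|right].
case=> l [r [E|E]]; apply/orP; [left|right]; apply/zip_splitP; by exists l, r.
Qed.

Lemma consec_sym s x y : consec s x y = consec s y x.
Proof. by rewrite /consec orbC. Qed.

Lemma consec_rev s x y : consec (rev s) x y = consec s x y.
Proof.
suff H : forall s, consec s x y -> consec (rev s) x y.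
  apply/idP/idP => [/H|/H //]; by rewrite revK.
move=> t /consecP [l [r [E|E]]]; apply/consecP; exists (rev r), (rev l); subst t;
  rewrite rev_cat !rev_cons -!cats1 -!catA /=; by [right|left].
Qed.

Lemma consec_mem s x y : consec s x y -> (x \in s) && (y \in s).
Proof.
by case/consecP => l [r [->|->]]; rewrite !mem_cat !in_cons !eqxx !orbT.
Qed.

Lemma uniq_split l1 r1 l2 r2 x :
  uniq (l1 ++ x :: r1) -> l1 ++ x :: r1 = l2 ++ x :: r2 -> l1 = l2 /\ r1 = r2.
Proof.
move=> U E.
have U2 : uniq (l2 ++ x :: r2) by rewrite -E.
have n1 : x \notin l1.
  by move: U; rewrite cat_uniq /= => /and3P [_ /norP [] ].
have n2 : x \notin l2.
  by move: U2; rewrite cat_uniq /= => /and3P [_ /norP [] ].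
have S : size l1 = size l2.
  have := congr1 (index x) E; rewrite !index_cat (negbTE n1) (negbTE n2) /= eqxx.
  by rewrite !addn0.
by move/eqP: E; rewrite eqseq_cat // => /andP [/eqP -> /eqP [->]].
Qed.

Lemma consec_mid l x r y :
  uniq (l ++ x :: r) -> consec (l ++ x :: r) x y -> y = last x l \/ y = head x r.
Proof.
move=> U /consecP [l' [r' [E|E]]].
  have [_ ->] := uniq_split U E; by right.
have E' : l ++ x :: r = rcons l' y ++ x :: r' by rewrite cat_rcons.
have [-> _] := uniq_split U E'; by left; rewrite last_rcons.
Qed.

Lemma consec_cat l w r x y :
  consec (l ++ w :: r) x y = consec (rcons l w) x y || consec (w :: r) x y.
Proof.
apply/idP/idP.
  move/consecP => [l' [r' H]].
  have key : forall x y, l ++ w :: r = l' ++ x :: y :: r' ->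
      consec (rcons l w) x y || consec (w :: r) x y.
    move=> {H} x' y'; elim: l l' => [|c l IH] [|c' l'].
    - case=> -> ->; apply/orP; right; apply/consecP; exists [::], r'; by left.
    - case=> -> ->; apply/orP; right; apply/consecP; exists (c' :: l'), r'; by left.
    - case: l IH => [|d l] IH /=.
        case=> -> -> ->; apply/orP; left; apply/consecP; exists [::], [::]; by left.
      case=> -> -> E; apply/orP; left; apply/consecP; exists [::], (rcons l w);
        by left.
    - case=> -> /IH /orP [] H; apply/orP; [left|right] => //.
      move/consecP: H => [l1 [r1 [E|E]]]; apply/consecP; exists (c' :: l1), r1;
        rewrite /= E; by [left|right].
  case: H => /key; first by [].
  by rewrite consec_sym (consec_sym (w :: r)).
case/orP => /consecP [l' [r' [E|E]]]; apply/consecP.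
- exists l', (r' ++ r); left.
  by rewrite -cat_rcons E -!catA.
- exists l', (r' ++ r); right. by rewrite -cat_rcons E -!catA.
- exists (l ++ l'), r'; left. by rewrite -catA -E.
- exists (l ++ l'), r'; right. by rewrite -catA -E.
Qed.

Lemma consec_fp_cat a l w r b x y :
  consec (fullpath a (l ++ w :: r) b) x y =
  consec (fullpath a l w) x y || consec (fullpath w r b) x y.
Proof.
by rewrite /fullpath rcons_cat /= -cat_cons consec_cat.
Qed.

Lemma fullpath_rev a q b : rev (fullpath a q b) = fullpath b (rev q) a.
Proof. by rewrite /fullpath rev_cons rev_rcons. Qed.

Lemma consec_fp_rev a q b x y :
  consec (fullpath b (rev q) a) x y = consec (fullpath a q b) x y.
Proof. by rewrite -fullpath_rev consec_rev. Qed.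

Lemma mem_fp a q b x : x \in fullpath a q b = [|| x == a, x \in q | x == b].
Proof. by unfold fullpath; rewrite in_cons mem_rcons in_cons (orbC (x == b)). Qed.

Lemma consec_interior a q b x y :
  q != [::] -> consec (fullpath a q b) x y -> (x \in q) || (y \in q).
Proof.
rewrite /consec /fullpath /=.
suff H : forall q a x y, q != [::] -> (x, y) \in zip (a :: rcons q b) (rcons q b) ->
   (x \in q) || (y \in q).
  move=> nq /orP [/H -> //|/(H _ _ _ _ nq)]; by rewrite orbC.
move=> {x y q}; elim=> [//|c q IH] a' x y _.
have -> : zip (a' :: rcons (c :: q) b) (rcons (c :: q) b) =
   (a', c) :: zip (c :: rcons q b) (rcons q b) by [].
rewrite in_cons => /orP [/eqP [_ ->]|]; first by rewrite mem_head orbT.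
case: q IH => [|d q] IH.
  have -> : zip (c :: rcons [::] b) (rcons [::] b) = [:: (c, b)] by [].
  by rewrite in_cons orbF => /eqP [-> _]; rewrite eqxx.
move/IH => /(_ isT) /orP [] H; rewrite !inE in H *; by rewrite H !orbT.
Qed.

End SeqLemmas.

Section Flat.
Variables (T I : eqType) (F : I -> seq T).

Lemma flatten_uniq_intro s :
  uniq s -> (forall i, i \in s -> uniq (F i)) ->
  (forall i j x, i \in s -> j \in s -> i != j -> x \in F i -> x \notin F j) ->
  uniq (flatten (map F s)).
Proof.
elim: s => [//|k s IH] /= /andP [ks us] HU HD.
rewrite cat_uniq; apply/and3P; split.
- by apply: HU; exact: mem_head.
- apply/hasPn => x /flatten_mapP [j js xj]; apply/negP => xk.
  have kj : k != j by apply: contraNneq ks => ->.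
  have js' : j \in k :: s by rewrite in_cons js orbT.
  by move: (HD k j x (mem_head _ _) js' kj xk); rewrite xj.
- apply: IH => //.
  + by move=> i Hi; apply: HU; rewrite in_cons Hi orbT.
  + by move=> i j x Hi Hj; apply: HD; rewrite in_cons ?Hi ?Hj orbT.
Qed.

Lemma flatten_uniq_elim s :
  uniq (flatten (map F s)) ->
  (forall i, i \in s -> uniq (F i)) /\
  (forall i j x, i \in s -> j \in s -> i != j -> x \in F i -> x \notin F j).
Proof.
elim: s => [//|k s IH] /=; rewrite cat_uniq => /and3P [uk hk /IH [IH1 IH2]].
split.
  by move=> i; rewrite in_cons => /orP [/eqP ->|/IH1].
have H1 : forall j x, j \in s -> x \in F k -> x \notin F j.
  move=> j x js xk; apply/negP => xj; move/hasPn: hk => /(_ x) H.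
  have : x \in flatten [seq F i | i <- s] by apply/flatten_mapP; exists j.
  by move/H; rewrite xk.
move=> i j x; rewrite !in_cons => /orP [/eqP ->|Hi] /orP [/eqP ->|js].
- by rewrite eqxx.
- by move=> _; apply: H1.
- by move=> _ xi; apply/negP => xk; move: (H1 i x Hi xk); rewrite xi.
- by apply: IH2.
Qed.

End Flat.

Notation o0 := (@Ordinal 3 0 isT).
Notation o1 := (@Ordinal 3 1 isT).
Notation o2 := (@Ordinal 3 2 isT).

Lemma ord3P (i : 'I_3) : [\/ i = o0, i = o1 | i = o2].
Proof.
case: i => [[|[|[|n]]] Hn].
- by constructor 1; apply: val_inj.
- by constructor 2; apply: val_inj.
- by constructor 3; apply: val_inj.
- by [].
Qed.

Definition role := (('I_3 + 'I_3) + ('I_3 * 'I_3))%type.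

Definition roles : seq role :=
  [:: inl (inl o0); inl (inl o1); inl (inl o2);
      inl (inr o0); inl (inr o1); inl (inr o2);
      inr (o0, o0); inr (o0, o1); inr (o0, o2);
      inr (o1, o0); inr (o1, o1); inr (o1, o2);
      inr (o2, o0); inr (o2, o1); inr (o2, o2)].

Lemma roles_uniq : uniq roles.
Proof. by []. Qed.

Lemma roles_all r : r \in roles.
Proof.
case: r => [[i|i]|[i j]]; case: (ord3P i) => ->; try (case: (ord3P j) => ->); by [].
Qed.

Section Rep.
Variables (T : finType) (e : rel T).
Hypothesis e_sym : symmetric e.

Definition Rep (a b : 'I_3 -> T) (q : 'I_3 -> 'I_3 -> seq T) (VL : {set T}) (EL : rel T) : Prop :=
    [/\ [/\ injective a, injective b & (forall i j, a i != b j)],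
        (forall i j, path e (a i) (rcons (q i j) (b j)) /\
                     uniq (fullpath (a i) (q i j) (b j))),
        (forall i j x, x \in q i j -> interior_ok a b q i j x),
        VL = [set x | [exists i, exists j, x \in fullpath (a i) (q i j) (b j)]] &
        (forall x y, EL x y = [exists i, exists j, consec (fullpath (a i) (q i j) (b j)) x y])].

Lemma isK33P VL EL : isK33sub e VL EL <-> exists a b q, Rep a b q VL EL.
Proof. by []. Qed.

Definition Fr (a b : 'I_3 -> T) (q : 'I_3 -> 'I_3 -> seq T) (r : role) : seq T :=
  match r with
  | inl (inl i) => [:: a i]
  | inl (inr j) => [:: b j]
  | inr p => q p.1 p.2
  end.

Definition L a b q := flatten (map (Fr a b q) roles).

Definition VLof (a b : 'I_3 -> T) (q : 'I_3 -> 'I_3 -> seq T) : {set T} :=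
  [set x | [exists i, exists j, x \in fullpath (a i) (q i j) (b j)]].
Definition ELof (a b : 'I_3 -> T) (q : 'I_3 -> 'I_3 -> seq T) : rel T :=
  fun x y => [exists i, exists j, consec (fullpath (a i) (q i j) (b j)) x y].

Lemma memL_fp a b q i j x : x \in fullpath (a i) (q i j) (b j) -> x \in L a b q.
Proof.
rewrite mem_fp => /or3P [/eqP ->|xq|/eqP ->]; apply/flatten_mapP.
- by exists (inl (inl i)); rewrite ?roles_all //= mem_head.
- by exists (inr (i, j)); rewrite ?roles_all.
- by exists (inl (inr j)); rewrite ?roles_all //= mem_head.
Qed.

Lemma Rep_memL a b q VL EL x : Rep a b q VL EL -> x \in L a b q -> x \in VL.
Proof.
case=> _ _ _ -> _ /flatten_mapP [[[i|j]|[i j]] _ /=]; rewrite inE.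
- rewrite inE => /eqP ->; apply/existsP; exists i; apply/existsP; exists i.
  by rewrite mem_fp eqxx.
- rewrite inE => /eqP ->; apply/existsP; exists j; apply/existsP; exists j.
  by rewrite mem_fp eqxx !orbT.
- move=> xq; apply/existsP; exists i; apply/existsP; exists j.
  by rewrite mem_fp xq orbT.
Qed.

Lemma Rep_uniqL a b q VL EL : Rep a b q VL EL -> uniq (L a b q).
Proof.
case=> [[ia ib ab] HP HI _ _].
apply: flatten_uniq_intro; first exact: roles_uniq.
  move=> [[i|j]|[i j]] _ //=.
  by have [_] := HP i j; rewrite /fullpath /= rcons_uniq => /andP [_ /andP []].
have aq : forall i i' j', a i \notin q i' j'.
  by move=> i i' j'; apply/negP => /HI [/(_ i) /eqP].
have bq : forall j i' j', b j \notin q i' j'.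
  by move=> j i' j'; apply/negP => /HI [_ [/(_ j) /eqP]].
move=> [[i|j]|[i j]] [[i'|j']|[i' j']] x _ _ /= ne; rewrite ?inE.
- move=> /eqP ->; apply: contra ne => /eqP /ia ->; by [].
- by move=> /eqP ->; apply/negP => /eqP E; move: (ab i j'); rewrite E eqxx.
- by move=> /eqP ->.
- by move=> /eqP ->; apply/negP => /eqP E; move: (ab i' j); rewrite E eqxx.
- move=> /eqP ->; apply: contra ne => /eqP /ib ->; by [].
- by move=> /eqP ->.
- by move=> xq; apply/negP => /eqP E; move: (aq i' i j); rewrite -E xq.
- by move=> xq; apply/negP => /eqP E; move: (bq j' i j); rewrite -E xq.
- move=> xq; apply/negP => xq'; have [_ [_ H]] := HI _ _ _ xq.
  have ne' : (i', j') != (i, j) by apply: contra ne => /eqP [-> ->].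
  by move: (H _ _ ne'); rewrite mem_fp xq' orbT.
Qed.

Lemma Good_Rep a b q :
  uniq (L a b q) -> (forall i j, path e (a i) (rcons (q i j) (b j))) ->
  Rep a b q (VLof a b q) (ELof a b q).
Proof.
move=> /flatten_uniq_elim [HU HD] HP.
have D : forall r r' x, r != r' -> x \in Fr a b q r -> x \notin Fr a b q r'.
  by move=> r r' x; apply: HD; apply: roles_all.
have ia : injective a.
  move=> i i' E; apply/eqP; apply/negPn/negP => ne.
  have : inl (inl i) != inl (inl i') :> role by apply: contra ne => /eqP [->].
  by move/D => /(_ (a i)) /=; rewrite !inE E eqxx => /(_ isT).
have ib : injective b.
  move=> i i' E; apply/eqP; apply/negPn/negP => ne.
  have : inl (inr i) != inl (inr i') :> role by apply: contra ne => /eqP [->].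
  by move/D => /(_ (b i)) /=; rewrite !inE E eqxx => /(_ isT).
have ab : forall i j, a i != b j.
  move=> i j; apply/negP => /eqP E.
  have : inl (inl i) != inl (inr j) :> role by [].
  by move/D => /(_ (a i)) /=; rewrite !inE E eqxx => /(_ isT).
have aq : forall i i' j', a i \notin q i' j'.
  move=> i i' j'; have : inl (inl i) != inr (i', j') :> role by [].
  by move/D => /(_ (a i)) /=; rewrite !inE eqxx => /(_ isT).
have bq : forall j i' j', b j \notin q i' j'.
  move=> j i' j'; have : inl (inr j) != inr (i', j') :> role by [].
  by move/D => /(_ (b j)) /=; rewrite !inE eqxx => /(_ isT).
split => //.
- move=> i j; split => //; rewrite /fullpath /= rcons_uniq mem_rcons in_cons.
  rewrite (negbTE (ab i j)) (negbTE (aq _ _ _)) (bq _ _ _).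
  by have := HU (inr (i, j)) (roles_all _).
- move=> i j x xq; split; [|split].
  + by move=> k; apply: contraTneq xq => ->.
  + by move=> k; apply: contraTneq xq => ->.
  + move=> i' j' ne; rewrite mem_fp; apply/negP => /or3P [/eqP E|xq'|/eqP E].
    * by move: (aq i' i j); rewrite -E xq.
    * have : inr (i, j) != inr (i', j') :> role by apply: contra ne => /eqP [-> ->].
      by move/D => /(_ x xq) /=; rewrite xq'.
    * by move: (bq j' i j); rewrite -E xq.
Qed.

End Rep.

Lemma consec_neq (T : eqType) (s : seq T) x y : uniq s -> consec s x y -> x != y.
Proof.
move=> U /consecP [l [r [E|E]]]; move: U; rewrite E cat_uniq /= => /and3P [_ _ /andP [H _]];
  apply: contraNneq H => ->; by rewrite mem_head.
Qed.

Section Struct.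
Variables (T : finType) (e : rel T).
Hypothesis e_sym : symmetric e.

Lemma path_rev_sym x p y : path e x (rcons p y) -> path e y (rcons (rev p) x).
Proof.
move=> H.
have E : rcons (rev p) x = rev (belast x (rcons p y)) by rewrite belast_rcons rev_cons.
rewrite E -{1}(last_rcons x p y) rev_path.
by rewrite (eq_path (e' := e)) // => u v; rewrite e_sym.
Qed.

Lemma Rep_transpose a b q VL EL :
  Rep e a b q VL EL -> Rep e b a (fun j i => rev (q i j)) VL EL.
Proof.
case=> [[ia ib ab] HP HI HV HE]; split.
- split => // j i; by rewrite eq_sym.
- move=> j i; have [p u] := HP i j; split; first exact: path_rev_sym.
  by rewrite -fullpath_rev rev_uniq.
- move=> j i x; rewrite mem_rev => /HI [h1 [h2 h3]]; split => //; split => //.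
  move=> j' i' ne; rewrite -fullpath_rev mem_rev; apply: h3.
  by apply: contra ne => /eqP [-> ->].
- rewrite HV; apply/setP => x; rewrite !inE; apply/existsP/existsP.
    move=> [i /existsP [j H]]; exists j; apply/existsP; exists i.
    by rewrite -fullpath_rev mem_rev.
  move=> [j /existsP [i H]]; exists i; apply/existsP; exists j.
  by rewrite -fullpath_rev mem_rev in H.
- move=> x y; rewrite HE; apply/existsP/existsP.
    move=> [i /existsP [j H]]; exists j; apply/existsP; exists i.
    by rewrite consec_fp_rev.
  move=> [j /existsP [i H]]; exists i; apply/existsP; exists j.
  by rewrite consec_fp_rev in H.
Qed.

Lemma Rep_relabel a b q VL EL (s t : 'I_3 -> 'I_3) :
  Rep e a b q VL EL -> injective s -> injective t ->
  Rep e (a \o s) (b \o t) (fun i j => q (s i) (t j)) VL EL.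
Proof.
case=> [[ia ib ab] HP HI HV HE] Is It.
have [s' ss' s's] := injF_bij Is.
have [t' tt' t't] := injF_bij It.
split.
- split => //=; [exact: inj_comp|exact: inj_comp].
- by move=> i j; apply: HP.
- move=> i j x /HI [h1 [h2 h3]]; split; first by move=> k; apply: h1.
  split; first by move=> k; apply: h2.
  move=> i' j' ne; apply: h3; apply: contra ne => /eqP [/Is -> /It ->]; by [].
- rewrite HV; apply/setP => x; rewrite !inE; apply/existsP/existsP.
    move=> [i /existsP [j H]]; exists (s' i); apply/existsP; exists (t' j).
    change (x \in fullpath (a (s (s' i))) (q (s (s' i)) (t (t' j))) (b (t (t' j)))).
    by rewrite s's t't.
  move=> [i /existsP [j H]]; exists (s i); apply/existsP; exists (t j); by [].
- move=> x y; rewrite HE; apply/existsP/existsP.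
    move=> [i /existsP [j H]]; exists (s' i); apply/existsP; exists (t' j).
    change (consec (fullpath (a (s (s' i))) (q (s (s' i)) (t (t' j))) (b (t (t' j)))) x y).
    by rewrite s's t't.
  move=> [i /existsP [j H]]; exists (s i); apply/existsP; exists (t j); by [].
Qed.

Variables (a b : 'I_3 -> T) (q : 'I_3 -> 'I_3 -> seq T) (VL : {set T}) (EL : rel T).
Hypothesis HR : Rep e a b q VL EL.

Lemma EL_consec i j x y : consec (fullpath (a i) (q i j) (b j)) x y -> EL x y.
Proof.
case: HR => _ _ _ _ -> H; apply/existsP; exists i; apply/existsP; by exists j.
Qed.

Lemma EL_sym x y : EL x y = EL y x.
Proof.
case: HR => _ _ _ _ HE; rewrite !HE.
by apply/existsP/existsP => -[i /existsP [j H]]; exists i; apply/existsP; exists j;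
  rewrite consec_sym.
Qed.

Lemma EL_interior i j x y : x \in q i j -> EL x y -> consec (fullpath (a i) (q i j) (b j)) x y.
Proof.
case: HR => _ _ HI _ HE xq; rewrite HE => /existsP [i' /existsP [j' H]].
case: (eqVneq (i', j') (i, j)) => [[<- <-] //|ne].
have [_ [_ /(_ i' j' ne)]] := HI _ _ _ xq.
by have /andP [-> _] := consec_mem H.
Qed.

Lemma interior_ness i j x : x \in q i j -> ~~ essential VL EL x.
Proof.
move=> xq; rewrite /essential /valence negb_and; apply/orP; right.
have HU : uniq (fullpath (a i) (q i j) (b j)) by case: HR => _ /(_ i j) [].
have [l [r E]] : exists l r, q i j = l ++ x :: r.
  by case/splitPr: xq => l r; exists l, r.
have Ef : fullpath (a i) (q i j) (b j) = (a i :: l) ++ x :: rcons r (b j).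
  by rewrite E /fullpath rcons_cat.
rewrite Ef in HU.
have sub : [set y | EL x y] \subset [set last x (a i :: l); head x (rcons r (b j))].
  apply/subsetP => y; rewrite !inE => /(EL_interior xq); rewrite Ef.
  by move=> /(consec_mid HU) [->|->]; rewrite eqxx ?orbT.
have := subset_leq_card sub; rewrite cards2.
by apply: contraTneq => ->; case: (_ != _).
Qed.

Lemma head_rcons_mem (x y : T) (p : seq T) : (head y p == y) || (head y p \in p).
Proof. by case: p => [|c p] /=; rewrite ?eqxx // mem_head orbT. Qed.

Lemma a_nbr i y : EL (a i) y -> exists j, y = head (b j) (q i j).
Proof.
case: HR => [[ia ib ab] HP HI HV HE]; rewrite HE => /existsP [i' /existsP [j H]].
have /andP [m _] := consec_mem H.
have ii : i' = i.
  move: m; rewrite mem_fp => /or3P [/eqP /ia -> //|/HI [/(_ i) /eqP //]|].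
  by move/eqP => E; move: (ab i j); rewrite E eqxx.
subst i'; exists j.
have [_ U] := HP i j.
have := consec_mid (l := [::]) U H => -[E|E].
  by move: (consec_neq U H); rewrite E /= eqxx.
by rewrite E; case: (q i j).
Qed.

Lemma a_nbr2 i j : EL (a i) (head (b j) (q i j)).
Proof.
apply: (EL_consec (i := i) (j := j)); apply/consecP.
exists [::], (behead (rcons (q i j) (b j))); left.
by rewrite /fullpath; case: (q i j).
Qed.

Lemma a_ess i : essential VL EL (a i).
Proof.
case: HR => [[ia ib ab] HP HI HV HE].
rewrite /essential; apply/andP; split.
  rewrite HV inE; apply/existsP; exists i; apply/existsP; exists i.
  by rewrite mem_fp eqxx.
pose h j := head (b j) (q i j).
have hcase : forall j, h j = b j \/ h j \in q i j.
  by move=> j; rewrite /h; case: (q i j) => [|c p] /=; [left|right; rewrite mem_head].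
have hP : forall j, h j \in fullpath (a i) (q i j) (b j).
  move=> j; rewrite mem_fp; case: (hcase j) => [->|->]; by rewrite ?eqxx ?orbT.
have hd : forall j j', j != j' -> h j != h j'.
  move=> j j' ne; apply/negP => /eqP E.
  have nij : forall j j', j != j' -> h j \in q i j -> h j != h j'.
    move=> k k' ne' hq; apply/negP => /eqP E'.
    have ne2 : (i, k') != (i, k) by apply: contra ne' => /eqP [->].
    have [_ [_ /(_ _ _ ne2)]] := HI _ _ _ hq.
    by rewrite E' hP.
  case: (hcase j) => [Hj|Hj]; last by move: (nij _ _ ne Hj); rewrite E eqxx.
  case: (hcase j') => [Hj'|Hj']; last first.
    by move: (nij j' j); rewrite eq_sym ne E eqxx => /(_ isT Hj').
  by move: ne; rewrite -(inj_eq ib) -Hj -Hj' E eqxx.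
rewrite /valence.
have -> : [set y | EL (a i) y] = [set h o0; h o1; h o2].
  apply/setP => y; rewrite !inE; apply/idP/idP.
    by case/a_nbr => j ->; case: (ord3P j) => ->; rewrite /h eqxx ?orbT.
  by move=> /orP [/orP [] | ] /eqP ->; apply: a_nbr2.
rewrite -setUA cardsU1 cards2 !inE negb_or !hd //.
Qed.
End Struct.

Lemma b_ess (T : finType) (e : rel T) (e_sym : symmetric e) a b q VL EL j :
  Rep e a b q VL EL -> essential VL EL (b j).
Proof. move=> HR; exact: (a_ess (Rep_transpose e_sym HR)). Qed.

Lemma interior_split (T : eqType) (a b : T) q l z r :
  a :: rcons q b = l ++ z :: r -> l != [::] -> r != [::] -> z \in q.
Proof.
case: l => [//|c l] /=; case/lastP: r => [//|r w] [_ E] _ _.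
move/eqP: E; rewrite -rcons_cons -rcons_cat eqseq_rcons => /andP [/eqP -> _].
by rewrite mem_cat mem_head orbT.
Qed.

Lemma last_fp (T : eqType) (a b : T) q l d : a :: rcons q b = l ++ [:: d] -> d = b.
Proof. by rewrite cats1 -rcons_cons => /eqP; rewrite eqseq_rcons => /andP [_ /eqP]. Qed.

Section Walk.
Variables (T : finType) (e : rel T).
Hypothesis e_sym : symmetric e.
Variables (a b : 'I_3 -> T) (q : 'I_3 -> 'I_3 -> seq T) (VL : {set T}) (EL : rel T).
Hypothesis HR : Rep e a b q VL EL.

Lemma ess_ab x : essential VL EL x -> (exists i, x = a i) \/ (exists j, x = b j).
Proof.
move=> Hx; have := Hx; case/andP; case: HR => _ _ _ -> _.
rewrite inE => /existsP [i /existsP [j]]; rewrite mem_fp => /or3P [/eqP ->|xq|/eqP ->] _.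
- by left; exists i.
- by move: (interior_ness HR xq); rewrite Hx.
- by right; exists j.
Qed.

Lemma walk i j : forall r z s1 w1 s2 y,
  fullpath (a i) (q i j) (b j) = rcons s1 w1 ++ z :: s2 -> s2 != [::] ->
  uniq (w1 :: z :: rcons r y) -> path EL z (rcons r y) ->
  all (fun z => ~~ essential VL EL z) r -> essential VL EL y -> rcons r y = s2.
Proof.
have HU : uniq (fullpath (a i) (q i j) (b j)) by case: HR => _ /(_ i j) [].
elim=> [|c r IH] z s1 w1 s2 y EP ns2 U Hp Hr Hy.
all: have zq : z \in q i j by
  apply: (interior_split (a := a i) (b := b j) (l := rcons s1 w1) (r := s2));
  rewrite // -?size_eq0 ?size_rcons; move: EP; rewrite /fullpath.
all: have nbr : forall c, EL z c -> c = w1 \/ c = head z s2 by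
  move=> c' /(EL_interior HR zq); rewrite EP => /(consec_mid (l := rcons s1 w1));
  rewrite last_rcons; apply; rewrite -EP.
all: case: s2 ns2 EP nbr => [//|d s2'] _ EP nbr.
all: have EP' : fullpath (a i) (q i j) (b j) = rcons (rcons s1 w1) z ++ d :: s2' by
  rewrite cat_rcons.
- move: Hp => /= /andP [/nbr [E|E] _].
    by move: U; rewrite E /= !inE eqxx orbT.
  rewrite /= in E; subst y; move: EP EP' nbr; case: s2' => [//|d' s2''] EP EP' nbr.
  have dq : d \in q i j.
    apply: (interior_split (a := a i) (b := b j) (l := rcons (rcons s1 w1) z)
      (r := d' :: s2'')); by rewrite -?size_eq0 ?size_rcons; move: EP'; rewrite /fullpath.
  by move: (interior_ness HR dq); rewrite Hy.
- move: Hp => /= /andP [/nbr [E|E] Hp].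
    by move: U; rewrite E /= !inE eqxx orbT.
  move: Hr => /= /andP [Hc Hr].
  rewrite /= in E; subst c.
  move: EP EP' nbr; case: s2' => [|d' s2''] EP EP' nbr.
    move: EP'; rewrite /fullpath => /last_fp Ed.
    by move: (@b_ess _ _ e_sym _ _ _ _ _ j HR); rewrite -Ed (negbTE Hc).
  rewrite /=; congr (_ :: _); apply: (IH d (rcons s1 w1) z) => //.
  by move: U => /= /andP [_].
Qed.

Lemma branch_id_a i p y : is_branch VL EL (a i) p y -> exists j, p = q i j /\ y = b j.
Proof.
case/and5P => Hp U _ Hy Hn.
case: p Hp U Hn => [|c p] /=.
  move=> /andP [/(a_nbr HR) [j Ej] _] _ _; exists j.
  case E: (q i j) Ej => [|c' q'] /= Ey; first by rewrite Ey.
  have : c' \in q i j by rewrite E mem_head.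
  by move/(interior_ness HR); rewrite -Ey Hy.
move=> /andP [/(a_nbr HR) [j Ej] Hp] U /andP [Hc Hn].
case E: (q i j) Ej => [|c' q'] /= Ec.
  by move: (@b_ess _ _ e_sym _ _ _ _ _ j HR); rewrite -Ec (negbTE Hc).
subst c.
have EP : fullpath (a i) (q i j) (b j) = rcons [::] (a i) ++ c' :: rcons q' (b j).
  by rewrite E.
have ns : rcons q' (b j) != [::] by rewrite -size_eq0 size_rcons.
rewrite /fullpath /= in U.
have /eqP := walk EP ns U Hp Hn Hy.
rewrite eqseq_rcons => /andP [/eqP -> /eqP ->]; exists j; by rewrite E.
Qed.

End Walk.

Lemma branch_id (T : finType) (e : rel T) (e_sym : symmetric e) a b q VL EL
  (HR : Rep e a b q VL EL) x p y : is_branch VL EL x p y ->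
  exists i j, (x = a i /\ p = q i j /\ y = b j) \/ (x = b j /\ p = rev (q i j) /\ y = a i).
Proof.
move=> H; have := H; case/and5P => _ _ Hx _ _.
case: (ess_ab HR Hx) => [[i Ei]|[j Ej]]; subst x.
  by have [j [-> ->]] := branch_id_a e_sym HR H; exists i, j; left.
have [i [-> ->]] := branch_id_a e_sym (Rep_transpose e_sym HR) H.
by exists i, j; right.
Qed.



Lemma arith1 n1 n2 n3 : n2 <= n1 - 2 + 1 - n3 -> 1 < n1 -> n1 <= n2 -> False.
Proof. lia. Qed.

Section Core.
Variables (T : finType) (e : rel T).
Hypothesis e_sym : symmetric e.

Lemma path_join x p y r z : path e x (rcons p y) -> path e y (rcons r z) ->
  path e x (rcons (p ++ y :: r) z).
Proof.
move=> H1 H2; rewrite rcons_cat cat_path /=; move: H1; rewrite rcons_path.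
by move=> /andP [-> ->].
Qed.

Lemma path_split x l w r y : path e x (rcons (l ++ w :: r) y) ->
  path e x (rcons l w) /\ path e w (rcons r y).
Proof.
rewrite rcons_cat cat_path /= => /and3P [H1 H2 H3]; split => //.
by rewrite rcons_path H1 H2.
Qed.

Variables (a b : 'I_3 -> T) (q : 'I_3 -> 'I_3 -> seq T) (VL : {set T}) (EL : rel T).
Hypothesis HR : Rep e a b q VL EL.
Hypothesis hmin : forall (VL' : {set T}) (EL' : rel T), isK33sub e VL' EL' ->
            nbad e VL' EL' <= nbad e VL EL -> nedges EL <= nedges EL'.
Variables u v : T.
Hypotheses (Hu : u \in q o0 o0) (Hv : v \in q o1 o1) (Huv : e u v).

Lemma core : q o2 o2 = [::].
Proof.
apply/eqP; apply/negPn/negP => nq22.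
have [qa [qb E00]] : exists qa qb, q o0 o0 = qa ++ u :: qb.
  by case/splitPr: Hu => l r; exists l, r.
have [qc [qd E11]] : exists qc qd, q o1 o1 = qc ++ v :: qd.
  by case/splitPr: Hv => l r; exists l, r.
pose na := fun k : 'I_3 => nth u [:: u; a o1; b o1] k.
pose nb := fun k : 'I_3 => nth v [:: v; a o0; b o0] k.
pose nq := fun i j : 'I_3 => nth [::] (nth [::]
   [:: [:: [::]; rev qa; qb];
       [:: qc; q o1 o2 ++ b o2 :: rev (q o0 o2); q o1 o0];
       [:: rev qd; rev (q o0 o1); rev (q o2 o1) ++ a o2 :: q o2 o0]] i) j.
have Hperm : perm_eq (L na nb nq ++ q o2 o2) (L a b q).
  apply/permP => p; rewrite /L /na /nb /nq /= E00 E11 !count_cat /= ?count_cat ?count_rev /= ?count_cat.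
  move: (nat_of_bool (p u)) (nat_of_bool (p v)) (nat_of_bool (p (a o0)))
    (nat_of_bool (p (a o1))) (nat_of_bool (p (a o2))) (nat_of_bool (p (b o0)))
    (nat_of_bool (p (b o1))) (nat_of_bool (p (b o2))) => *.
  lia.
have UL' : uniq (L na nb nq ++ q o2 o2) by rewrite (perm_uniq Hperm); exact: Rep_uniqL HR.
have UL : uniq (L na nb nq) by move: UL'; rewrite cat_uniq => /andP [].
have HPo : forall i j, path e (a i) (rcons (q i j) (b j)) by case: HR => _ HP _ _ _ i j; case: (HP i j).
have [P0a P0b] : path e (a o0) (rcons qa u) /\ path e u (rcons qb (b o0)).
  by apply: path_split; rewrite -E00.
have [P1a P1b] : path e (a o1) (rcons qc v) /\ path e v (rcons qd (b o1)).
  by apply: path_split; rewrite -E11.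
have HP' : forall i j, path e (na i) (rcons (nq i j) (nb j)).
  move=> i j; case: (ord3P i) => ->; case: (ord3P j) => ->; rewrite /na /nb /nq /=.
  - by rewrite Huv.
  - exact: path_rev_sym.
  - exact: P0b.
  - exact: P1a.
  - exact: (path_join (HPo o1 o2) (path_rev_sym e_sym (HPo o0 o2))).
  - exact: (HPo o1 o0).
  - exact: path_rev_sym.
  - exact: (path_rev_sym e_sym (HPo o0 o1)).
  - exact: (path_join (path_rev_sym e_sym (HPo o2 o1)) (HPo o2 o0)).
have HR' := Good_Rep UL HP'.
pose VL' := VLof na nb nq. pose EL' := ELof na nb nq.
have C1 : forall x, x \in VL' -> x \in VL.
  move=> x; rewrite inE => /existsP [i /existsP [j H]].
  apply: (Rep_memL HR); rewrite -(perm_mem Hperm) mem_cat; apply/orP; left.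
  exact: memL_fp H.
have C1b : forall x, x \in q o2 o2 -> x \notin VL'.
  move=> x xq; apply/negP; rewrite inE => /existsP [i /existsP [j /memL_fp H]].
  by move: UL'; rewrite cat_uniq => /and3P [_ /hasPn /(_ x xq)]; rewrite H.
have memEL : forall x y, EL' x y -> (x \in VL') && (y \in VL').
  move=> x y /existsP [i /existsP [j H]]; have /andP [hx hy] := consec_mem H.
  by rewrite !inE; apply/andP; split; apply/existsP; exists i; apply/existsP; exists j.
have ELc : forall i j x y, consec (fullpath (a i) (q i j) (b j)) x y -> EL x y.
  by move=> i j x y; apply: (EL_consec HR).
have EL'c : forall i j x y, consec (fullpath (na i) (nq i j) (nb j)) x y -> EL' x y.
  by move=> i j x y H; apply/existsP; exists i; apply/existsP; exists j.
have C3 : forall x y, EL' x y -> EL x y \/ (x = u /\ y = v) \/ (x = v /\ y = u).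
  move=> x y /existsP [i /existsP [j]].
  case: (ord3P i) => ->; case: (ord3P j) => ->; rewrite /na /nb /nq /= => H.
  - right; move: H; rewrite /consec /fullpath /= !inE.
    by case/orP => /eqP [-> ->]; [left|right].
  - rewrite consec_fp_rev in H; left; apply: (ELc o0 o0).
    by rewrite E00 consec_fp_cat H.
  - left; apply: (ELc o0 o0); by rewrite E00 consec_fp_cat H orbT.
  - left; apply: (ELc o1 o1); by rewrite E11 consec_fp_cat H.
  - rewrite consec_fp_cat in H; case/orP: H => H; left.
      exact: (ELc o1 o2).
    apply: (ELc o0 o2); by rewrite -consec_fp_rev.
  - left; exact: (ELc o1 o0).
  - rewrite consec_fp_rev in H; left; apply: (ELc o1 o1).
    by rewrite E11 consec_fp_cat H orbT.
  - rewrite consec_fp_rev in H; left; exact: (ELc o0 o1).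
  - rewrite consec_fp_cat in H; case/orP: H => H; left.
      by apply: (ELc o2 o1); rewrite -consec_fp_rev.
    exact: (ELc o2 o0).
have C2 : forall x y, EL x y -> x \in VL' -> y \in VL' -> EL' x y.
  move=> x y; case: HR => _ _ _ _ -> /existsP [i /existsP [j]].
  case: (ord3P i) => ->; case: (ord3P j) => -> H hx hy.
  - rewrite E00 consec_fp_cat in H; case/orP: H => H.
      by apply: (EL'c o0 o1); rewrite /na /nb /nq /= consec_fp_rev.
    by apply: (EL'c o0 o2); rewrite /na /nb /nq /=.
  - by apply: (EL'c o2 o1); rewrite /na /nb /nq /= consec_fp_rev.
  - apply: (EL'c o1 o1); rewrite /na /nb /nq /= consec_fp_cat consec_fp_rev.
    by rewrite H orbT.
  - by apply: (EL'c o1 o2); rewrite /na /nb /nq /=.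
  - rewrite E11 consec_fp_cat in H; case/orP: H => H.
      by apply: (EL'c o1 o0); rewrite /na /nb /nq /=.
    by apply: (EL'c o2 o0); rewrite /na /nb /nq /= consec_fp_rev.
  - by apply: (EL'c o1 o1); rewrite /na /nb /nq /= consec_fp_cat H.
  - apply: (EL'c o2 o2); rewrite /na /nb /nq /= consec_fp_cat.
    by rewrite H orbT.
  - apply: (EL'c o2 o2); rewrite /na /nb /nq /= consec_fp_cat consec_fp_rev.
    by rewrite H.
  - case/orP: (consec_interior nq22 H) => /C1b; by rewrite ?hx ?hy.
case E22: (q o2 o2) nq22 => [//|c q''] _.
have cq : c \in q o2 o2 by rewrite E22 mem_head.
have Hc : c \notin VL' := C1b c cq.
pose d := head (b o2) q''.
have U22 : uniq (fullpath (a o2) (q o2 o2) (b o2)) by case: HR => _ /(_ o2 o2) [].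
rewrite E22 /fullpath /= in U22.
have dm : d \in rcons q'' (b o2) by rewrite /d; case: (q'') => [|z w] /=; rewrite ?mem_head.
have [a2c a2d] : a o2 != c /\ a o2 != d.
  move: U22 => /andP [H _]; rewrite in_cons negb_or in H; case/andP: H => H1 H2.
  by split => //; apply: contraNneq H2 => ->.
have EL1 : EL (a o2) c.
  apply: (ELc o2 o2); apply/consecP; exists [::], (rcons q'' (b o2)); left.
  by rewrite E22 /fullpath.
have EL2 : EL c d.
  apply: (ELc o2 o2); apply/consecP; exists [:: a o2], (behead (rcons q'' (b o2))); left.
  by rewrite E22 /fullpath /d /=; case: (q'').
pose Ed := fun R : rel T => [set s : {set T} | [exists x, exists y, R x y && (s == [set x; y])]].
pose e1 := [set a o2; c]. pose e2 := [set c; d].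
have e12 : e1 != e2.
  apply/negP => /eqP H; have : a o2 \in e2 by rewrite -H /e1 in_setU !in_set1 eqxx.
  by rewrite /e2 in_setU !in_set1 (negbTE a2c) (negbTE a2d).
have Hsub : Ed EL' \subset (Ed EL :\: [set e1; e2]) :|: [set [set u; v]].
  apply/subsetP => s; rewrite inE => /existsP [x /existsP [y /andP [H /eqP ->]]].
  have /andP [hx hy] := memEL x y H.
  case: (C3 x y H) => [Hxy|[[-> ->]|[-> ->]]]; rewrite in_setU.
  - apply/orP; left; rewrite in_setD; apply/andP; split; last first.
      rewrite inE; apply/existsP; exists x; apply/existsP; exists y; by rewrite Hxy eqxx.
    have cs : c \notin [set x; y].
      rewrite in_setU !in_set1; apply/norP; split; apply: contraNneq Hc => ->; by [].
    rewrite in_setU !in_set1 negb_or; apply/andP; split; apply: contraNneq cs => ->.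
      by rewrite /e1 in_setU !in_set1 eqxx orbT.
    by rewrite /e2 in_setU !in_set1 eqxx.
  - by rewrite in_set1 eqxx orbT.
  - by rewrite in_set1 setUC eqxx orbT.
have Ssub : [set e1; e2] \subset Ed EL.
  apply/subsetP => s; rewrite in_setU !in_set1 => /orP [] /eqP ->; rewrite inE.
    by apply/existsP; exists (a o2); apply/existsP; exists c; rewrite EL1 eqxx.
  by apply/existsP; exists c; apply/existsP; exists d; rewrite EL2 eqxx.
have Hbad : nbad e VL' EL' <= nbad e VL EL.
  apply: subset_leq_card; apply/subsetP => s; rewrite !inE.
  move=> /existsP [x /existsP [y /andP [H /eqP ->]]].
  apply/existsP; exists x; apply/existsP; exists y; rewrite eqxx andbT.
  move: H; rewrite /bad_edge => /and4P [exy hx hy nEL].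
  rewrite exy (C1 _ hx) (C1 _ hy) /=.
  by apply: contra nEL => H; apply: C2.
have Hm := hmin (VL' := VL') (EL' := EL') (ex_intro _ na (ex_intro _ nb (ex_intro _ nq HR'))) Hbad.
have c1 := subset_leq_card Hsub.
have c2 := subset_leq_card Ssub.
have Hm' : #|Ed EL| <= #|Ed EL'| by move: Hm; rewrite /nedges /Ed.
move: c1 c2 Hm'; rewrite cardsU cardsD (setIidPr Ssub) cards2 e12 cards1 /=.
move: #|Ed EL| #|Ed EL'| #|(Ed EL :\: [set e1; e2]) :&: [set [set u; v]]| => n1 n2 n3.
exact: arith1.
Qed.
End Core.

Lemma perm3 (i0 i1 i2 : 'I_3) : i0 != i1 -> i0 != i2 -> i1 != i2 ->
  exists s : 'I_3 -> 'I_3, [/\ injective s, s o0 = i0, s o1 = i1 & s o2 = i2].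
Proof.
move=> h01 h02 h12; exists (fun k : 'I_3 => nth i0 [:: i0; i1; i2] k); split => //.
move=> k k'; case: (ord3P k) => ->; case: (ord3P k') => -> //= E;
  by move: h01 h02 h12; rewrite E eqxx ?andbF.
Qed.

Lemma branch_info (T : finType) (e : rel T) (e_sym : symmetric e) a b q VL EL
  (HR : Rep e a b q VL EL) x p y :
  is_branch VL EL x p y -> exists i j,
    [/\ (forall z, z \in fullpath x p y -> ~~ essential VL EL z -> z \in q i j),
        (p == [::]) = (q i j == [::]),
        a i \in [:: x; y] & b j \in [:: x; y]].
Proof.
move=> H; have := H; case/and5P => _ _ Hx Hy _.
have [i [j [[Ex [Ep Ey]]|[Ex [Ep Ey]]]]] := branch_id e_sym HR H; exists i, j;
  subst x p y; split.
- move=> z; rewrite mem_fp => /or3P [/eqP ->|//|/eqP ->]; by rewrite ?Hx ?Hy.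
- by [].
- by rewrite mem_head.
- by rewrite !inE eqxx orbT.
- move=> z; rewrite mem_fp mem_rev => /or3P [/eqP ->|//|/eqP ->]; by rewrite ?Hx ?Hy.
- by rewrite -!size_eq0 size_rev.
- by rewrite !inE eqxx orbT.
- by rewrite mem_head.
Qed.

Lemma disjP (T : finType) (x1 y1 x2 y2 z : T) :
  branches_disjoint x1 y1 x2 y2 -> z \in [:: x1; y1] -> z \notin [:: x2; y2].
Proof.
case/and4P => h1 h2 h3 h4; rewrite !inE => /orP [] /eqP ->; rewrite negb_or;
  by apply/andP; split.
Qed.

Theorem mainTheorem8 (T : finType) (e : rel T)
  (e_sym : symmetric e) (e_irr : irreflexive e) (e_tf : triangle_free e)
  (VL : {set T}) (EL : rel T)
  (hK : isK33sub e VL EL)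
  (hmin : forall (VL' : {set T}) (EL' : rel T), isK33sub e VL' EL' ->
            nbad e VL' EL' <= nbad e VL EL -> nedges EL <= nedges EL')
  (x1 y1 x2 y2 : T) (q1 q2 : seq T)
  (halpha : is_branch VL EL x1 q1 y1) (hbeta : is_branch VL EL x2 q2 y2)
  (hdisj : branches_disjoint x1 y1 x2 y2)
  (u v : T)
  (hu : u \in fullpath x1 q1 y1) (hu_ne : ~~ essential VL EL u)
  (hv : v \in fullpath x2 q2 y2) (hv_ne : ~~ essential VL EL v)
  (huv : bad_edge e VL EL u v) :
  forall (x3 y3 : T) (q3 : seq T),
    is_branch VL EL x3 q3 y3 ->
    branches_disjoint x3 y3 x1 y1 -> branches_disjoint x3 y3 x2 y2 ->
    q3 = [::].
Proof.
move=> x3 y3 q3 hgamma hd31 hd32.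
case: hK => a [b [q HR0]].
have HR : Rep e a b q VL EL := HR0.
have [i0 [j0 [U1 _ A1 B1]]] := branch_info e_sym HR halpha.
have [i1 [j1 [U2 _ A2 B2]]] := branch_info e_sym HR hbeta.
have [i2 [j2 [_ N3 A3 B3]]] := branch_info e_sym HR hgamma.
have ne : forall z, z \in [:: x1; y1] -> z \in [:: x2; y2] -> False.
  by move=> z /(disjP hdisj) /negP.
have ne31 : forall z, z \in [:: x3; y3] -> z \in [:: x1; y1] -> False.
  by move=> z /(disjP hd31) /negP.
have ne32 : forall z, z \in [:: x3; y3] -> z \in [:: x2; y2] -> False.
  by move=> z /(disjP hd32) /negP.
have h01 : i0 != i1 by apply/negP => /eqP E; apply: (ne (a i0)); rewrite // E.
have h02 : i0 != i2 by apply/negP => /eqP E; apply: (ne31 (a i0)); rewrite // E.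
have h12 : i1 != i2 by apply/negP => /eqP E; apply: (ne32 (a i1)); rewrite // E.
have k01 : j0 != j1 by apply/negP => /eqP E; apply: (ne (b j0)); rewrite // E.
have k02 : j0 != j2 by apply/negP => /eqP E; apply: (ne31 (b j0)); rewrite // E.
have k12 : j1 != j2 by apply/negP => /eqP E; apply: (ne32 (b j1)); rewrite // E.
have [s [Is s0 s1 s2]] := perm3 h01 h02 h12.
have [t [It t0 t1 t2]] := perm3 k01 k02 k12.
have HR2 := Rep_relabel HR Is It.
have Hu : u \in q (s o0) (t o0) by rewrite s0 t0; apply: U1.
have Hv : v \in q (s o1) (t o1) by rewrite s1 t1; apply: U2.
have Huv : e u v by case/and4P: huv.
have := core e_sym HR2 hmin Hu Hv Huv.
rewrite /= s2 t2 => E; apply/eqP; by rewrite N3 E.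
Qed.
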